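(* Consider two $2\times 2$ matrices $G, A$ of real numbers, where $A$ is symmetric and positive definite, i.e. \[ G=\begin{pmatrix}a&b\\ c&d\end{pmatrix},\qquad A=\begin{pmatrix}\alpha&\beta\\ \beta&\gamma\end{pmatrix} \quad(\alpha>0,\ \delta:=\det(A)=\alpha\gamma-\beta^{2}>0). \] Then there exists a symmetric matrix $S=\begin{pmatrix}s_{11}& s_{12}\\ s_{12}& s_{22}\end{pmatrix}$ solving \[ SG+G^TS=2SAS\quad \text{and}\quad \mathrm{trace}(G-AS)=0, \] and which is of the following form: \begin{itemize} \item[(i)] If $\mathrm{trace}(G)=a+d=0$, we can choose $S=0$. \item[(ii)] If $\mathrm{trace}(G)=a+d \neq 0$ and $G$ is singular, i.e. $\det(G)=ad-bc=0$, we can choose \begin{eqnarray*} S&=&\frac{a+d}{\alpha a^2+2\beta ab + \gamma b^2}\begin{pmatrix}a^2& ab\\ ab& b^2\end{pmatrix}, \qquad \text{if }\ b\not =0,\\[3pt] S&=&\frac{a+d}{\alpha c^2+2\beta cd + \gamma d^2}\begin{pmatrix}c^2& cd\\ cd& d^2\end{pmatrix}, \qquad \text{if }\ b=0,\ c\not=0, \end{eqnarray*} and in case $b=c=0$, we may choose \begin{eqnarray*} S\ =\ \begin{pmatrix}\frac{a}{\alpha}& 0\\ 0& 0\end{pmatrix}, \qquad \text{if }\ a\not =0,\qquad S\ =\ \begin{pmatrix}0& 0\\ 0& \frac{d}{\gamma}\end{pmatrix}, \qquad \text{if }\ d\not=0. \end{eqnarray*} \item[(iii)] If $\mathrm{trace}(G)=a+d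 \neq 0$ and $G$ is non-singular, i.e. $\det(G)=ad-bc\not=0$, we can choose \begin{eqnarray*} S\ =\ \kappa\begin{pmatrix}\gamma a(a+d) + \alpha c^2 - \gamma bc - 2\beta ac& \alpha cd + \gamma ab - 2\beta ad\\ \alpha cd + \gamma ab - 2\beta ad& \alpha d(a+d) + \gamma b^2 - \alpha bc - 2\beta bd\end{pmatrix}, \end{eqnarray*} where \[ \kappa=\frac{a+d}{ (\alpha \gamma-\beta^2) (a+d)^2 +\big( \gamma b - \alpha c + \beta(a-d)\big)^2}. \] \end{itemize}
   Context: Dimension $d=2$. All matrices have real entries. *)

(* Defs.v *)
From HB Require Import structures.
From mathcomp Require Import all_boot all_order all_algebra.
Set Implicit Arguments. Unset Strict Implicit. Unset Printing Implicit Defensive.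
Import Order.TTheory GRing.Theory Num.Theory.
Local Open Scope ring_scope.

Definition mx2 (R : nzRingType) (p q r s : R) : 'M[R]_2 :=
  \matrix_(i < 2, j < 2)
    if (i == 0 :> nat) then (if (j == 0 :> nat) then p else q)
    else (if (j == 0 :> nat) then r else s).

Definition is_solution (R : nzRingType) (G A S : 'M[R]_2) : Prop :=
  S^T = S /\
  S *m G + G^T *m S = 2%:R *: (S *m A *m S) /\
  \tr (G - A *m S) = 0.

(* Main.v *)
Require Import Defs.
From HB Require Import structures.
From mathcomp Require Import all_boot all_order all_algebra.
From mathcomp Require Import ring lra.
Import Order.TTheory GRing.Theory Num.Theory.
Local Open Scope ring_scope.

Section M.
Variable R : realFieldType.
Implicit Types p q r s k u v w x : R.

Lemma mx2E p q r s (i j : 'I_2) : mx2 p q r s i j =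
  if (i == 0 :> nat) then (if (j == 0 :> nat) then p else q)
    else (if (j == 0 :> nat) then r else s).
Proof. by rewrite mxE. Qed.

Lemma mx2_eq p q r s u v w x : p = u -> q = v -> r = w -> s = x ->
  mx2 p q r s = mx2 u v w x.
Proof. by move=> -> -> -> ->. Qed.

Lemma mx2_mul p q r s u v w x : mx2 p q r s *m mx2 u v w x =
  mx2 (p * u + q * w) (p * v + q * x) (r * u + s * w) (r * v + s * x).
Proof.
apply/matrixP => i j; rewrite !mxE !big_ord_recl !big_ord0 !mxE.
by case: i => [[|[|//]] ?]; case: j => [[|[|//]] ?] => /=; rewrite addr0.
Qed.

Lemma mx2_tr p q r s : (mx2 p q r s)^T = mx2 p r q s.
Proof.
apply/matrixP => i j; rewrite !mxE.
by case: i => [[|[|//]] ?]; case: j => [[|[|//]] ?].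
Qed.

Lemma mx2_add p q r s u v w x : mx2 p q r s + mx2 u v w x =
  mx2 (p + u) (q + v) (r + w) (s + x).
Proof.
apply/matrixP => i j; rewrite !mxE.
by case: i => [[|[|//]] ?]; case: j => [[|[|//]] ?].
Qed.

Lemma mx2_opp p q r s : - mx2 p q r s = mx2 (-p) (-q) (-r) (-s).
Proof.
apply/matrixP => i j; rewrite !mxE.
by case: i => [[|[|//]] ?]; case: j => [[|[|//]] ?].
Qed.

Lemma mx2_scale k p q r s : k *: mx2 p q r s = mx2 (k * p) (k * q) (k * r) (k * s).
Proof.
apply/matrixP => i j; rewrite !mxE.
by case: i => [[|[|//]] ?]; case: j => [[|[|//]] ?].
Qed.

Lemma mx2_tr_trace p q r s : \tr (mx2 p q r s) = p + s.
Proof. by rewrite /mxtrace !big_ord_recl big_ord0 !mxE /= addr0. Qed.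

Lemma mx2_0 : (0 : 'M[R]_2) = mx2 0 0 0 0.
Proof.
apply/matrixP => i j; rewrite !mxE.
by case: i => [[|[|//]] ?]; case: j => [[|[|//]] ?].
Qed.

Lemma sol_iff a b c d al be ga p q s :
  q = q ->
  (p * a + q * c) + (a * p + c * q) = 2%:R * ((p * al + q * be) * p + (p * be + q * ga) * q) ->
  (p * b + q * d) + (a * q + c * s) = 2%:R * ((p * al + q * be) * q + (p * be + q * ga) * s) ->
  (q * a + s * c) + (b * p + d * q) = 2%:R * ((q * al + s * be) * p + (q * be + s * ga) * q) ->
  (q * b + s * d) + (b * q + d * s) = 2%:R * ((q * al + s * be) * q + (q * be + s * ga) * s) ->
  (a - (al * p + be * q)) + (d - (be * q + ga * s)) = 0 ->
  is_solution (mx2 a b c d) (mx2 al be be ga) (mx2 p q q s).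
Proof.
move=> _ e1 e2 e3 e4 e5; rewrite /is_solution !mx2_tr !mx2_mul mx2_add mx2_scale.
rewrite mx2_opp mx2_add mx2_tr_trace; split=> //; split=> //.
by apply: mx2_eq.
Qed.
End M.

Theorem theorem2p13 (R : realFieldType) (a b c d alpha beta gamma : R) :
  0 < alpha -> 0 < alpha * gamma - beta ^+ 2 ->
  let G := mx2 a b c d in
  let A := mx2 alpha beta beta gamma in
  (exists S : 'M[R]_2, is_solution G A S) /\
  (* (i) *)
  (a + d = 0 -> is_solution G A 0) /\
  (* (ii) *)
  (a + d != 0 -> a * d - b * c = 0 -> b != 0 ->
     is_solution G A ((a + d) / (alpha * a ^+ 2 + 2%:R * beta * a * b + gamma * b ^+ 2)
                        *: mx2 (a ^+ 2) (a * b) (a * b) (b ^+ 2))) /\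
  (a + d != 0 -> a * d - b * c = 0 -> b = 0 -> c != 0 ->
     is_solution G A ((a + d) / (alpha * c ^+ 2 + 2%:R * beta * c * d + gamma * d ^+ 2)
                        *: mx2 (c ^+ 2) (c * d) (c * d) (d ^+ 2))) /\
  (a + d != 0 -> a * d - b * c = 0 -> b = 0 -> c = 0 -> a != 0 ->
     is_solution G A (mx2 (a / alpha) 0 0 0)) /\
  (a + d != 0 -> a * d - b * c = 0 -> b = 0 -> c = 0 -> d != 0 ->
     is_solution G A (mx2 0 0 0 (d / gamma))) /\
  (* (iii) *)
  (a + d != 0 -> a * d - b * c != 0 ->
     let kappa := (a + d) / ((alpha * gamma - beta ^+ 2) * (a + d) ^+ 2
                    + (gamma * b - alpha * c + beta * (a - d)) ^+ 2) in
     is_solution G A (kappa *: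
       mx2 (gamma * a * (a + d) + alpha * c ^+ 2 - gamma * b * c - 2%:R * beta * a * c)
           (alpha * c * d + gamma * a * b - 2%:R * beta * a * d)
           (alpha * c * d + gamma * a * b - 2%:R * beta * a * d)
           (alpha * d * (a + d) + gamma * b ^+ 2 - alpha * b * c - 2%:R * beta * b * d))).
Proof.
move=> hal hdel G A.
have ga0 : 0 < gamma.
  have hb2 := sqr_ge0 beta.
  have : 0 < alpha * gamma by lra.
  by rewrite pmulr_rgt0.
have ga0' : gamma != 0 by rewrite gt_eqF.
have al0' : alpha != 0 by rewrite gt_eqF.
have posq : forall x y : R, x != 0 ->
                             0 < alpha * y ^+ 2 + 2%:R * beta * y * x + gamma * x ^+ 2.
  move=> x y hx; have hx2 : 0 < x ^+ 2 by rewrite exprn_even_gt0.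
  rewrite -(pmulr_rgt0 _ hal).
  have -> : alpha * (alpha * y ^+ 2 + 2%:R * beta * y * x + gamma * x ^+ 2)
     = (alpha * y + beta * x) ^+ 2 + (alpha * gamma - beta ^+ 2) * x ^+ 2 by ring.
  apply: ltr_wpDl; first exact: sqr_ge0.
  exact: mulr_gt0.
have posq2 : forall x y : R, y != 0 ->
                             0 < alpha * y ^+ 2 + 2%:R * beta * y * x + gamma * x ^+ 2.
  move=> x y hx; have hx2 : 0 < y ^+ 2 by rewrite exprn_even_gt0.
  rewrite -(pmulr_rgt0 _ ga0).
  have -> : gamma * (alpha * y ^+ 2 + 2%:R * beta * y * x + gamma * x ^+ 2)
     = (gamma * x + beta * y) ^+ 2 + (alpha * gamma - beta ^+ 2) * y ^+ 2 by ring.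
  apply: ltr_wpDl; first exact: sqr_ge0.
  exact: mulr_gt0.
have h1 : a + d = 0 -> is_solution G A 0.
  move=> hs; rewrite mx2_0; apply: sol_iff => //; rewrite ?(mulr0, mul0r, addr0, subr0) //.
have h2 : a + d != 0 -> a * d - b * c = 0 -> b != 0 ->
     is_solution G A ((a + d) / (alpha * a ^+ 2 + 2%:R * beta * a * b + gamma * b ^+ 2)
                        *: mx2 (a ^+ 2) (a * b) (a * b) (b ^+ 2)).
  move=> hs hdet hb.
  have hD : alpha * a ^+ 2 + 2%:R * beta * a * b + gamma * b ^+ 2 != 0.
    by rewrite gt_eqF // posq.
  have hc : c = a * d / b.
    have -> : c = (a * d - (a * d - b * c)) / b by field.
    by rewrite hdet subr0.
  rewrite mx2_scale; apply: sol_iff => //; rewrite ?hc; field; by rewrite ?hD ?hb.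
have h3 : a + d != 0 -> a * d - b * c = 0 -> b = 0 -> c != 0 ->
     is_solution G A ((a + d) / (alpha * c ^+ 2 + 2%:R * beta * c * d + gamma * d ^+ 2)
                        *: mx2 (c ^+ 2) (c * d) (c * d) (d ^+ 2)).
  move=> hs hdet hb hc.
  have hD : alpha * c ^+ 2 + 2%:R * beta * c * d + gamma * d ^+ 2 != 0.
    by rewrite gt_eqF // posq2.
  move: hdet; rewrite hb mul0r subr0 => /eqP; rewrite mulf_eq0 => /orP [] /eqP e;
    subst; rewrite mx2_scale; apply: sol_iff => //; field; by rewrite ?hD ?hc.
have h4 : a + d != 0 -> a * d - b * c = 0 -> b = 0 -> c = 0 -> a != 0 ->
     is_solution G A (mx2 (a / alpha) 0 0 0).
  move=> hs hdet hb hc ha.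
  have hd : d = 0.
    by move: hdet; rewrite hb hc mul0r subr0 => /eqP; rewrite mulf_eq0 (negPf ha) => /eqP.
  apply: sol_iff => //; rewrite ?hb ?hc ?hd; field; by [].
have h5 : a + d != 0 -> a * d - b * c = 0 -> b = 0 -> c = 0 -> d != 0 ->
     is_solution G A (mx2 0 0 0 (d / gamma)).
  move=> hs hdet hb hc hd.
  have ha : a = 0.
    by move: hdet; rewrite hb hc mul0r subr0 => /eqP; rewrite mulf_eq0 (negPf hd) orbF => /eqP.
  apply: sol_iff => //; rewrite ?hb ?hc ?ha; field; by [].
have h6 : a + d != 0 -> a * d - b * c != 0 ->
     let kappa := (a + d) / ((alpha * gamma - beta ^+ 2) * (a + d) ^+ 2
                    + (gamma * b - alpha * c + beta * (a - d)) ^+ 2) in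
     is_solution G A (kappa *:
       mx2 (gamma * a * (a + d) + alpha * c ^+ 2 - gamma * b * c - 2%:R * beta * a * c)
           (alpha * c * d + gamma * a * b - 2%:R * beta * a * d)
           (alpha * c * d + gamma * a * b - 2%:R * beta * a * d)
           (alpha * d * (a + d) + gamma * b ^+ 2 - alpha * b * c - 2%:R * beta * b * d)).
  move=> hs hdet kappa.
  have hD : (alpha * gamma - beta ^+ 2) * (a + d) ^+ 2
                    + (gamma * b - alpha * c + beta * (a - d)) ^+ 2 != 0.
    have hx2 : 0 < (a + d) ^+ 2 by rewrite exprn_even_gt0.
    rewrite gt_eqF //; apply: ltr_wpDr; first exact: sqr_ge0.
    exact: mulr_gt0.
  rewrite mx2_scale /kappa; apply: sol_iff => //; field; by [].
split; last by [].
case: (eqVneq (a + d) 0) => hs; first by exists 0; apply: h1.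
case: (eqVneq (a * d - b * c) 0) => hdet; last by eexists; apply: h6.
case: (eqVneq b 0) => hb; last by eexists; apply: h2.
case: (eqVneq c 0) => hc; last by eexists; apply: h3.
case: (eqVneq a 0) => ha; last by eexists; apply: h4.
have hd : d != 0 by move: hs; rewrite ha add0r.
by eexists; apply: h5.
Qed.
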